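(* Let $F:P\to\mathbb R^{\mathbf C}$ be a nontrivial, $\mathbb R$-linear, neutral cardinal welfare function. Then $F$ satisfies the IIA criterion if and only if $|\lambda|=2$.
   Context: Fix an integer $n\ge 2$ and a set $\mathbf C$ of $n$ candidates. Fix a composition $\lambda=(\lambda_1,\dots,\lambda_m)$ of $n$ (positive integers with $\sum_i\lambda_i=n$), write $|\lambda|=m$ and $[m]=\{1,\dots,m\}$. A ballot is a function $b:\mathbf C\to[m]$ with $|b^{-1}(i)|=\lambda_i$ for every $i$; $\mathbf C_\lambda$ denotes the set of ballots. The profile space is $P=\mathbb R^{\mathbf C_\lambda}$ with basis $\{\delta_b\}$ (indicator functions) and inner product $\mathbf p\cdot\mathbf q=\sum_b\mathbf p(b)\mathbf q(b)$. For candidates $X,Y$: $\mathbf a_{X>Y}=\sum_{b:\,b(X)<b(Y)}\delta_b$. Two profiles are $X,Y$-equivalent, $\mathbf p\sim_{X,Y}\mathbf q$, if $(\mathbf p-\mathbf q)\cdot\mathbf a_{X>Y}=0$ and $(\mathbf p-\mathbf q)\cdot\mathbf a_{Y>X}=0$. A cardinal welfare function (CWF) is any map $F:P\to\mathbb R^{\mathbf C}$; it is trivial if for every $\mathbf p$ the function $F(\mathbf p):\mathbf C\to\mathbb R$ is constant. The symmetric group $S_{\mathbf C}$ acts on $\mathbf C_\lambda$ by $\sigma.b=b\circ\sigma^{-1}$, on $P$ by linearly extending $\sigma.\delta_b=\delta_{\sigma.b}$, and on $\mathbb R^{\mathbf C}$ by $(\sigma.f)(X)=f(\sigma^{-1}X)$;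 $F$ is neutral if $F(\sigma.\mathbf p)=\sigma.F(\mathbf p)$ for all $\sigma,\mathbf p$. $F$ satisfies the IIA criterion (independence of irrelevant alternatives) if for every ordered pair of distinct candidates $X,Y$ and all $\mathbf p,\mathbf q\in P$ with $\mathbf p\sim_{X,Y}\mathbf q$, $F(\mathbf p)(X)>F(\mathbf p)(Y)$ implies $F(\mathbf q)(X)>F(\mathbf q)(Y)$. *)

(* Defs.v *)
From HB Require Import structures.
From mathcomp Require Import all_boot all_order all_algebra all_fingroup.
Set Implicit Arguments. Unset Strict Implicit. Unset Printing Implicit Defensive.
Import Order.TTheory GRing.Theory Num.Theory.
Local Open Scope ring_scope.

Section Cwf.
Variables (R : realFieldType) (lam : seq nat) (C : finType).

(* A composition lam of n = #|C| (positivity and sum are hypotheses of the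
   theorem); m = |lam| = size lam; [m] is represented by 'I_(size lam)
   (0-based). *)
Definition is_ballot (b : {ffun C -> 'I_(size lam)}) : bool :=
  [forall i : 'I_(size lam), #|[pred x | b x == i]| == nth 0%N lam i].

Local Notation ballot := {b : {ffun C -> 'I_(size lam)} | is_ballot b}.

Local Notation profile := {ffun ballot -> R}.

Definition dot (p q : profile) : R := \sum_b p b * q b.
Definition a_gt (X Y : C) : profile :=
  [ffun b : ballot => if (val b X < val b Y)%N then 1 else 0].

Definition equivXY (X Y : C) (p q : profile) : Prop :=
  dot (p - q) (a_gt X Y) = 0 /\ dot (p - q) (a_gt Y X) = 0.

Lemma bact_ballot (s : {perm C}) (b : ballot) :
  is_ballot [ffun x => val b ((s^-1)%g x)].
Proof.
apply/forallP => i; case: b => b /= /forallP /(_ i) /eqP <-.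
apply/eqP.
rewrite -(card_image (@perm_inj _ (s^-1)%g)); apply/eq_card => x.
apply/imageP/idP.
  by case=> y; rewrite inE ffunE => H ->.
by move=> H; exists (s x); rewrite ?permK // unfold_in /= ffunE permK.
Qed.

Definition bact (s : {perm C}) (b : ballot) : ballot :=
  exist _ [ffun x => val b ((s^-1)%g x)] (bact_ballot s b).

(* action on profiles (linear extension of delta_b |-> delta_{sigma.b}):
   (sigma.p)(b) = p(sigma^{-1}.b) *)
Definition pact (s : {perm C}) (p : profile) : profile :=
  [ffun b => p (bact (s^-1)%g b)].

Definition fact (s : {perm C}) (f : {ffun C -> R}) : {ffun C -> R} :=
  [ffun X => f ((s^-1)%g X)].

Definition cwf_linear (F : profile -> {ffun C -> R}) : Prop :=
  forall (a : R) (p q : profile), F [ffun b => a * p b + q b] = [ffun X => a * F p X + F q X].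

Definition cwf_trivial (F : profile -> {ffun C -> R}) : Prop :=
  forall (p : profile) (X Y : C), F p X = F p Y.

Definition cwf_neutral (F : profile -> {ffun C -> R}) : Prop :=
  forall (s : {perm C}) (p : profile), F (pact s p) = fact s (F p).

Definition cwf_IIA (F : profile -> {ffun C -> R}) : Prop :=
  forall (X Y : C), X != Y -> forall p q : profile, equivXY X Y p q ->
    F p Y < F p X -> F q Y < F q X.

End Cwf.

Notation ballot lam C := {b : {ffun C -> 'I_(size lam)} | @is_ballot lam C b}.
Notation profile R lam C := {ffun ballot lam C -> R}.

(* Main.v *)
Require Import Defs.
From HB Require Import structures.
From mathcomp Require Import all_boot all_order all_algebra all_fingroup.
From mathcomp Require Import zify ring lra.
Import Order.TTheory GRing.Theory Num.Theory.
Local Open Scope ring_scope.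

Lemma bactM (lam : seq nat) (C : finType) (s t : {perm C}) (b : ballot lam C) :
  bact (s * t)%g b = bact t (bact s b).
Proof. by apply: val_inj; apply/ffunP => x; rewrite /= !ffunE invMg permM. Qed.

Lemma bact1 (lam : seq nat) (C : finType) (b : ballot lam C) : bact 1%g b = b.
Proof. by apply: val_inj; apply/ffunP => x; rewrite /= !ffunE invg1 perm1. Qed.

Lemma bactK (lam : seq nat) (C : finType) (s : {perm C}) :
  cancel (@bact lam C s) (bact (s^-1)%g).
Proof. by move=> b; rewrite -bactM mulgV bact1. Qed.

Lemma bactKV (lam : seq nat) (C : finType) (s : {perm C}) :
  cancel (@bact lam C (s^-1)%g) (bact s).
Proof. by move=> b; rewrite -bactM mulVg bact1. Qed.

Lemma bactE (lam : seq nat) (C : finType) (s : {perm C}) (b : ballot lam C) x :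
  val (bact s b) x = val b ((s^-1)%g x).
Proof. by rewrite /= ffunE. Qed.

Lemma ballot_trans (lam : seq nat) (C : finType) (b2 : ballot lam C) :
  forall b1, exists s : {perm C}, bact s b1 = b2 /\
    (forall x, val b1 x = val b2 x -> s x = x).
Proof.
move=> b1.
move: {2}#|[set x | val b1 x != val b2 x]| (leqnn #|[set x | val b1 x != val b2 x]|) => n.
elim: n b1 => [|n IH] b1 hn;
  (case: (boolP [exists x, val b1 x != val b2 x]) => [/existsP [u hu]|hno]).
- have : (0 < #|[set x | val b1 x != val b2 x]|)%N.
    by apply/card_gt0P; exists u; rewrite inE.
  by rewrite leqn0 in hn; rewrite (eqP hn).
- exists 1%g; split; last by move=> x _; rewrite perm1.
  apply: val_inj; apply/ffunP => x; rewrite bactE invg1 perm1.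
  by move/existsPn: hno => /(_ x) /negPn /eqP.
- pose i := val b2 u.
  have c1 := valP b1; have c2 := valP b2.
  move/forallP: c1 => /(_ i) /eqP c1; move/forallP: c2 => /(_ i) /eqP c2.
  have : ~~ ([pred x | val b1 x == i] \subset [pred x | val b2 x == i]).
    apply/negP => /(subset_cardP _) => H.
    have /H : #|[pred x | val b1 x == i]| = #|[pred x | val b2 x == i]| by rewrite c1 c2.
    by move=> /(_ u); rewrite !inE eqxx (negbTE hu).
  case/subsetPn => v; rewrite !inE => /eqP hv1 hv2.
  have huv : u != v by apply: contraNneq hv2 => <-.
  pose t := tperm u v.
  have [s' [hs' hfix]] : exists s' : {perm C}, bact s' (bact t b1) = b2 /\
    (forall x, val (bact t b1) x = val b2 x -> s' x = x).
    apply: IH; rewrite -ltnS; apply: leq_trans hn; apply: proper_card.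
    apply/properP; split.
      apply/subsetP => x; rewrite !inE bactE tpermV.
      case: (tpermP u v x) => [->|->|_ _].
      - by rewrite hv1 eqxx.
      - by move=> _; rewrite hv1 eq_sym.
      - by [].
    by exists u; rewrite !inE ?bactE ?tpermV ?tpermL ?hv1 ?eqxx.
  exists (t * s')%g; split; first by rewrite bactM.
  move=> x hx.
  have hxu : u != x by apply/eqP => hux; move: hu; rewrite hux hx eqxx.
  have hxv : v != x by apply/eqP => hvx; move: hv2; rewrite -hv1 hvx hx eqxx.
  rewrite permM /t tpermD // hfix // bactE tpermV tpermD //.
- exists 1%g; split; last by move=> x _; rewrite perm1.
  apply: val_inj; apply/ffunP => x; rewrite bactE invg1 perm1.
  by move/existsPn: hno => /(_ x) /negPn /eqP.
Qed.

Set Implicit Arguments. Unset Strict Implicit.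

Definition delta (R : realFieldType) (lam : seq nat) (C : finType) (b : ballot lam C) :
  profile R lam C := [ffun b' => (b' == b)%:R].

Lemma pact_delta (R : realFieldType) (lam : seq nat) (C : finType) (s : {perm C})
  (b : ballot lam C) : pact s (delta R b) = delta R (bact s b).
Proof.
apply/ffunP => b'; rewrite !ffunE.
by rewrite (can2_eq (@bactKV lam C s) (@bactK lam C s)).
Qed.

Lemma F_add (R : realFieldType) (lam : seq nat) (C : finType)
  (F : profile R lam C -> {ffun C -> R}) (Flin : cwf_linear F) p q :
  F (p + q) = F p + F q.
Proof.
have := Flin 1 p q.
have -> : [ffun b => 1 * p b + q b] = p + q by apply/ffunP => b; rewrite !ffunE mul1r.
move=> ->; by apply/ffunP => X; rewrite !ffunE mul1r.
Qed.

Lemma F_0 (R : realFieldType) (lam : seq nat) (C : finType)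
  (F : profile R lam C -> {ffun C -> R}) (Flin : cwf_linear F) : F 0 = 0.
Proof.
have h := F_add Flin 0 0; rewrite addr0 in h.
by apply: (addrI (F 0)); rewrite addr0 -h.
Qed.

Lemma F_sub (R : realFieldType) (lam : seq nat) (C : finType)
  (F : profile R lam C -> {ffun C -> R}) (Flin : cwf_linear F) p q :
  F (p - q) = F p - F q.
Proof. by rewrite -[in RHS](subrK q p) (F_add Flin (p - q) q) addrK. Qed.

Lemma F_neg (R : realFieldType) (lam : seq nat) (C : finType)
  (F : profile R lam C -> {ffun C -> R}) (Flin : cwf_linear F) p :
  F (- p) = - F p.
Proof. by rewrite -sub0r (F_sub Flin) (F_0 Flin) sub0r. Qed.

Lemma F_sum (R : realFieldType) (lam : seq nat) (C : finType)
  (F : profile R lam C -> {ffun C -> R}) (Flin : cwf_linear F) (I : Type) (r : seq I) g :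
  F (\sum_(i <- r) g i) = \sum_(i <- r) F (g i).
Proof.
elim: r => [|a r IH]; first by rewrite !big_nil (F_0 Flin).
by rewrite !big_cons (F_add Flin) IH.
Qed.

Lemma F_decomp (R : realFieldType) (lam : seq nat) (C : finType)
  (F : profile R lam C -> {ffun C -> R}) (Flin : cwf_linear F) p Z :
  F p Z = \sum_b p b * F (delta R b) Z.
Proof.
have hp : p = \sum_b [ffun b' => p b * delta R b b' + (0 : profile R lam C) b'].
  apply/ffunP => b'; rewrite sum_ffunE (bigD1 b') //= big1 => [|b hb].
    by rewrite !ffunE eqxx mulr1 !addr0.
  by rewrite !ffunE eq_sym (negbTE hb) mulr0 addr0.
rewrite {1}hp (F_sum Flin) sum_ffunE; apply: eq_bigr => b _.
by rewrite Flin (F_0 Flin) !ffunE addr0.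
Qed.

Lemma NE (R : realFieldType) (lam : seq nat) (C : finType)
  (F : profile R lam C -> {ffun C -> R}) (Fneu : cwf_neutral F) s b Z :
  F (delta R (bact s b)) Z = F (delta R b) ((s^-1)%g Z).
Proof. by rewrite -pact_delta Fneu ffunE. Qed.

Lemma tier (R : realFieldType) (lam : seq nat) (C : finType)
  (F : profile R lam C -> {ffun C -> R}) (Fneu : cwf_neutral F) (b : ballot lam C) X Y :
  val b X = val b Y -> F (delta R b) X = F (delta R b) Y.
Proof.
move=> h.
have hb : bact (tperm X Y) b = b.
  apply: val_inj; apply/ffunP => x; rewrite bactE tpermV.
  by case: (tpermP X Y x) => [->|->|]; rewrite ?h.
by rewrite -{1}hb (NE Fneu) tpermV tpermL.
Qed.

Lemma dot_delta (R : realFieldType) (lam : seq nat) (C : finType) (b : ballot lam C)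
  (q : profile R lam C) : dot (delta R b) q = q b.
Proof.
rewrite /dot (bigD1 b) //= big1 => [|b' hb]; first by rewrite ffunE eqxx mul1r addr0.
by rewrite ffunE (negbTE hb) mul0r.
Qed.

Lemma dotB (R : realFieldType) (lam : seq nat) (C : finType) (p q a : profile R lam C) :
  dot (p - q) a = dot p a - dot q a.
Proof. by rewrite /dot -sumrB; apply: eq_bigr => b _; rewrite !ffunE mulrBl. Qed.

Lemma nontriv_wit (R : realFieldType) (lam : seq nat) (C : finType)
  (F : profile R lam C -> {ffun C -> R}) (Flin : cwf_linear F) :
  ~ cwf_trivial F -> exists b Z W, F (delta R b) Z != F (delta R b) W.
Proof.
move=> Fnt.
case: (boolP [exists b, exists Z, exists W, F (delta R b) Z != F (delta R b) W]).
  by case/existsP => b /existsP [Z /existsP [W h]]; exists b, Z, W.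
move=> hno; exfalso; apply: Fnt => p Z W.
rewrite !(F_decomp Flin); apply: eq_bigr => b _; congr (_ * _).
by move/existsPn: hno => /(_ b) /existsPn /(_ Z) /existsPn /(_ W) /negPn /eqP.
Qed.

Lemma two_point (C : finType) (X Y x y : C) :
  X != Y -> x != y -> exists t : {perm C}, t X = x /\ t Y = y.
Proof.
move=> hXY hxy.
pose t1 := tperm X x; pose y' := t1 Y.
have hy' : x != y'.
  by rewrite /y' /t1 -{1}(tpermL X x) (inj_eq (@perm_inj _ _)).
exists (t1 * tperm y' y)%g; split; rewrite permM.
  by rewrite /t1 tpermL tpermD // eq_sym.
by rewrite -/y' tpermL.
Qed.

Lemma viol (R : realFieldType) (lam : seq nat) (C : finType)
  (F : profile R lam C -> {ffun C -> R}) (Flin : cwf_linear F) X Y (hXY : X != Y)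
  (b1 b2 : ballot lam C) :
  (val b1 X < val b1 Y)%N -> (val b2 X < val b2 Y)%N ->
  F (delta R b2) X - F (delta R b2) Y < F (delta R b1) X - F (delta R b1) Y ->
  ~ cwf_IIA F.
Proof.
move=> h1 h2 hlt hI.
pose p := delta R b1 - delta R b2.
have n1 : (val b1 Y < val b1 X)%N = false by apply/negbTE; rewrite -leqNgt ltnW.
have n2 : (val b2 Y < val b2 X)%N = false by apply/negbTE; rewrite -leqNgt ltnW.
have hE : equivXY X Y p 0.
  by split; rewrite subr0 dotB !dot_delta !ffunE ?h1 ?h2 ?n1 ?n2 subrr.
have hP : F p Y < F p X.
  rewrite -subr_gt0.
  have -> : F p X - F p Y = (F (delta R b1) X - F (delta R b1) Y)
     - (F (delta R b2) X - F (delta R b2) Y) by rewrite /p (F_sub Flin) !ffunE; ring.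
  by rewrite subr_gt0.
have := hI X Y hXY p 0 hE hP.
by rewrite (F_0 Flin) !ffunE ltxx.
Qed.

Lemma tier_ne (lam : seq nat) (C : finType) (hpos : all (fun k => (0 < k)%N) lam)
  (b : ballot lam C) k : (k < size lam)%N -> exists x, nat_of_ord (val b x) = k.
Proof.
move=> hk.
have := valP b => /forallP /(_ (Ordinal hk)) /eqP hc.
have : (0 < nth 0%N lam k)%N by apply: (allP hpos); apply: mem_nth.
rewrite -[nth _ _ _]/(nth 0%N lam (Ordinal hk)) -hc => /card_gt0P [x].
by rewrite inE => /eqP hx; exists x; rewrite hx.
Qed.

Lemma two_aux (a b c d : nat) : (a < b)%N -> (b < 2)%N -> (c < d)%N -> (d < 2)%N -> a = c.
Proof. lia. Qed.
Lemma two_aux' (a b c d : nat) : (a < b)%N -> (b < 2)%N -> (c < d)%N -> (d < 2)%N -> b = d.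
Proof. lia. Qed.

Lemma iia_of_2 (R : realFieldType) (lam : seq nat) (C : finType)
  (F : profile R lam C -> {ffun C -> R}) (Flin : cwf_linear F) (Fneu : cwf_neutral F)
  (hm : size lam = 2%N) : cwf_IIA F.
Proof.
move=> X Y hXY p q [e1 e2] hp.
pose g (b : ballot lam C) := F (delta R b) X - F (delta R b) Y.
pose h (b : ballot lam C) : R := a_gt R lam X Y b - a_gt R lam Y X b.
pose t := tperm X Y.
have gt : forall b : ballot lam C, g (bact t b) = - g b.
  by move=> b; rewrite /g !(NE Fneu) tpermV tpermL tpermR opprB.
have bt : forall b : ballot lam C, (val (bact t b) X = val b Y) * (val (bact t b) Y = val b X).
  by move=> b; rewrite !bactE tpermV tpermL tpermR.
have g0 : forall b : ballot lam C, val b X = val b Y -> g b = 0.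
  by move=> b hb; rewrite /g (tier Fneu hb) subrr.
have hlt : forall b : ballot lam C, (val b X < val b Y)%N -> h b = 1.
  move=> b hb; rewrite /h !ffunE hb.
  have -> : (val b Y < val b X)%N = false by apply/negbTE; rewrite -leqNgt ltnW.
  by rewrite subr0.
have heq : forall b : ballot lam C, val b X = val b Y -> h b = 0.
  by move=> b hb; rewrite /h !ffunE hb ltnn subrr.
have [k hk] : exists k, forall b : ballot lam C, g b = k * h b.
  case: (boolP [exists b : ballot lam C, (val b X < val b Y)%N]) => [/existsP [b0 hb0]|hno].
  - have key : forall b : ballot lam C, (val b X < val b Y)%N -> g b = g b0.
      move=> b hb.
      have hX : val b0 X = val b X.
        apply: ord_inj.
        have h3 : (val b0 Y < 2)%N by rewrite -[X in (_ < X)%N]hm ltn_ord.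
        have h4 : (val b Y < 2)%N by rewrite -[X in (_ < X)%N]hm ltn_ord.
        exact: (two_aux hb0 h3 hb h4).
      have hY : val b0 Y = val b Y.
        apply: ord_inj.
        have h3 : (val b0 Y < 2)%N by rewrite -[X in (_ < X)%N]hm ltn_ord.
        have h4 : (val b Y < 2)%N by rewrite -[X in (_ < X)%N]hm ltn_ord.
        exact: (two_aux' hb0 h3 hb h4).
      have [s [hs hfix]] := @ballot_trans lam C b b0.
      have sX := hfix X hX; have sY := hfix Y hY.
      have sX' : (s^-1)%g X = X by rewrite -{1}sX permK.
      have sY' : (s^-1)%g Y = Y by rewrite -{1}sY permK.
      by rewrite -hs /g !(NE Fneu) sX' sY'.
    exists (g b0) => b.
    case: (ltngtP (val b X) (val b Y)) => hb.
    + by rewrite hlt // mulr1 key.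
    + have hb' : (val (bact t b) X < val (bact t b) Y)%N by rewrite !bt.
      have := key _ hb'; rewrite gt => /eqP; rewrite eqr_oppLR => /eqP ->.
      rewrite /h !ffunE hb.
      have -> : (val b X < val b Y)%N = false by apply/negbTE; rewrite -leqNgt ltnW.
      by rewrite sub0r mulrN1.
    + have hb' : val b X = val b Y by apply: val_inj.
      by rewrite g0 // heq // mulr0.
  - exists 0 => b; rewrite mul0r.
    case: (ltngtP (val b X) (val b Y)) => hb.
    + by move/existsPn: hno => /(_ b); rewrite hb.
    + have hb' : (val (bact t b) X < val (bact t b) Y)%N by rewrite !bt.
      by move/existsPn: hno => /(_ (bact t b)); rewrite hb'.
    + by apply: g0; apply: val_inj.
have D : forall r : profile R lam C, F r X - F r Y = k * (dot r (a_gt R lam X Y) - dot r (a_gt R lam Y X)).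
  move=> r; rewrite !(F_decomp Flin) -sumrB /dot -sumrB mulr_sumr.
  apply: eq_bigr => b _; rewrite -mulrBr.
  have := hk b; rewrite /g /h => ->; by rewrite -mulrBr mulrCA.
have := D (p - q); rewrite e1 e2 subrr mulr0 (F_sub Flin) !ffunE => hpq.
move: hp hpq.
move: (F p X) (F p Y) (F q X) (F q Y) => a1 a2 a3 a4; lra.
Qed.

Unset Implicit Arguments. Set Strict Implicit.

Lemma lt2_aux (a b s : nat) : (a < s)%N -> (b < s)%N -> (s < 2)%N -> a = b.
Proof. lia. Qed.

Theorem mainTheorem8 (R : realFieldType) (C : finType) (lam : seq nat)
  (hn : (2 <= #|C|)%N)
  (hpos : all (fun k => (0 < k)%N) lam)
  (hsum : sumn lam = #|C|)
  (F : profile R lam C -> {ffun C -> R})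
  (Flin : cwf_linear F) (Fneu : cwf_neutral F) (Fnt : ~ cwf_trivial F) :
  cwf_IIA F <-> size lam = 2%N.
Proof.
split; last by apply: iia_of_2.
move=> hI.
have [b [Z [W hZW]]] := nontriv_wit Flin Fnt.
pose f := F (delta R b).
have hbZW : val b Z != val b W.
  apply: contra hZW => /eqP h; apply/eqP. exact: (@tier R lam C F Fneu b Z W h).
have hZW' : Z != W by apply/eqP => e; move: hbZW; rewrite e eqxx.
case: (ltngtP (size lam) 2) => hm //; exfalso.
  move: hbZW; rewrite (ord_inj (@lt2_aux _ _ _ (ltn_ord (val b Z)) (ltn_ord (val b W)) hm)).
  by rewrite eqxx.
have [e0 he0] := tier_ne hpos b (ltn_trans (isT : (0 < 2)%N) hm).
have [e1 he1] := tier_ne hpos b (ltn_trans (isT : (1 < 2)%N) hm).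
have [e2 he2] := tier_ne hpos b hm.
case: (boolP [exists x1, exists y1, exists x2, exists y2,
   [&& (val b x1 < val b y1)%N, (val b x2 < val b y2)%N & f x1 - f y1 != f x2 - f y2]]).
  case/existsP => x1 /existsP [y1 /existsP [x2 /existsP [y2 /and3P [h1 h2 hne]]]].
  have hxy1 : x1 != y1 by apply/eqP => e; move: h1; rewrite e ltnn.
  have hxy2 : x2 != y2 by apply/eqP => e; move: h2; rewrite e ltnn.
  have [t1 [t1Z t1W]] := two_point hZW' hxy1.
  have [t2 [t2Z t2W]] := two_point hZW' hxy2.
  pose b1 := bact (t1^-1)%g b; pose b2 := bact (t2^-1)%g b.
  have v1 : (val b1 Z < val b1 W)%N by rewrite /b1 !bactE invgK t1Z t1W.
  have v2 : (val b2 Z < val b2 W)%N by rewrite /b2 !bactE invgK t2Z t2W.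
  have g1 : F (delta R b1) Z - F (delta R b1) W = f x1 - f y1.
    by rewrite /b1 !(NE Fneu) invgK t1Z t1W.
  have g2 : F (delta R b2) Z - F (delta R b2) W = f x2 - f y2.
    by rewrite /b2 !(NE Fneu) invgK t2Z t2W.
  have [hlt|hgt|heq] := ltgtP (f x2 - f y2) (f x1 - f y1).
  - by apply: (viol Flin hZW' v1 v2 _ hI); rewrite g1 g2.
  - by apply: (viol Flin hZW' v2 v1 _ hI); rewrite g1 g2.
  - by move: hne; rewrite heq eqxx.
move=> hno.
have H : forall x1 y1 x2 y2, (val b x1 < val b y1)%N -> (val b x2 < val b y2)%N ->
    f x1 - f y1 = f x2 - f y2.
  move=> x1 y1 x2 y2 h1 h2.
  move/existsPn: hno => /(_ x1) /existsPn /(_ y1) /existsPn /(_ x2) /existsPn /(_ y2).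
  by rewrite h1 h2 /= negbK => /eqP.
have H1 := H e0 e1 e1 e2 ltac:(by rewrite he0 he1) ltac:(by rewrite he1 he2).
have H2 := H e0 e1 e0 e2 ltac:(by rewrite he0 he1) ltac:(by rewrite he0 he2).
case: (ltngtP (val b Z) (val b W)) => hb.
- have H3 := H Z W e0 e1 hb ltac:(by rewrite he0 he1).
  move/eqP: hZW; apply; move: H1 H2 H3; rewrite -/f.
  move: (f Z) (f W) (f e0) (f e1) (f e2) => a1 a2 a3 a4 a5; lra.
- have H3 := H W Z e0 e1 hb ltac:(by rewrite he0 he1).
  move/eqP: hZW; apply; move: H1 H2 H3; rewrite -/f.
  move: (f Z) (f W) (f e0) (f e1) (f e2) => a1 a2 a3 a4 a5; lra.
- by move: hbZW; rewrite (ord_inj hb) eqxx.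
Qed.
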